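(* Let $M$ be a matroid on $E$ and let $(M_1,\dots,M_d)$ be a $d$-th symmetric power of $M$. Then for every flat $F$ of $M$, the set $F\cdot\mathrm{Sym}_{d-1}(E)$ is a flat of $M_d$.
   Context: $\mathrm{Sym}_d(E)$: multisets of size $d$ from $E$, written multiplicatively, $\mathrm{Sym}_0(E)=\{1\}$; $F\cdot\mathrm{Sym}_{d-1}(E)$ is the set of elements of $\mathrm{Sym}_d(E)$ containing at least one element of $F$. For $\alpha\in\mathrm{Sym}_{d-i}(E)$ and a matroid $N$ on $\mathrm{Sym}_d(E)$, $N|_\alpha$ is the restriction to $\{\alpha\beta:\beta\in\mathrm{Sym}_i(E)\}$. A $d$-th symmetric quasi power of $M$ is a sequence $(M_1,\dots,M_d)$ of matroids, $M_1=M$, $M_i$ on $\mathrm{Sym}_i(E)$, such that for every $1\le i\le d$ and $\alpha\in\mathrm{Sym}_{d-i}(E)$: if no element of $\alpha$ is a loop of $M$, $\beta\mapsto\alpha\beta$ is an isomorphism $M_i\cong M_d|_\alpha$; otherwise $\mathrm{rk}(M_d|_\alpha)=0$. It is a $d$-th symmetric power if also $\mathrm{rk}(M_d)=\binom{\mathrm{rk}(M)+d-1}{d}$. *)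

(* Defs.v *)
From mathcomp Require Import all_boot.
Set Implicit Arguments. Unset Strict Implicit. Unset Printing Implicit Defensive.

Record matroid (T : finType) := Matroid {
  ground : {set T};
  indep : {set T} -> bool;
  indep_ground : forall I, indep I -> I \subset ground;
  indep0 : indep set0;
  indep_sub : forall I J : {set T}, J \subset I -> indep I -> indep J;
  indep_aug : forall I J : {set T}, indep I -> indep J -> #|I| < #|J| ->
     exists2 x, x \in J :\: I & indep (x |: I)
}.

Section MatroidNotions.
Variable T : finType.
Implicit Types (M : matroid T) (A : {set T}).

Definition rk M A : nat := \max_(I : {set T} | indep M I && (I \subset A)) #|I|.

Definition mrank M : nat := rk M (ground M).

Definition flat M A : Prop :=
  A \subset ground M /\ forall x, x \in ground M :\: A -> rk M A < rk M (x |: A).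

Definition loop M (x : T) : bool := (x \in ground M) && ~~ indep M [set x].
End MatroidNotions.

(* [f] is an isomorphism from N onto the restriction N'|_S *)
Definition iso_restr (T T' : finType) (N : matroid T) (N' : matroid T')
    (f : T -> T') (S : {set T'}) : Prop :=
  {in ground N &, injective f} /\ f @: ground N = S /\ S \subset ground N' /\
  forall I : {set T}, I \subset ground N -> indep N I = indep N' (f @: I).

(* Multisets over E of size at most d, written as multiplicity functions. *)
Definition msetT (E : finType) (d : nat) := {ffun E -> 'I_d.+1}.

(* Sym_i(E) inside the ambient type (for i <= d) *)
Definition Sym (E : finType) (d i : nat) : {set msetT E d} :=
  [set m : msetT E d | \sum_(e : E) (m e : nat) == i].

Definition mmul (E : finType) (d : nat) (a b : msetT E d) : msetT E d :=
  [ffun e => inord (a e + b e)].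

Definition msingle (E : finType) (d : nat) (e : E) : msetT E d :=
  [ffun x => inord (x == e)].

(* F . Sym_{d-1}(E): elements of Sym_d(E) containing some element of F *)
Definition FSym (E : finType) (d : nat) (F : {set E}) : {set msetT E d} :=
  [set m in @Sym E d d | [exists e in F, 0 < (m : msetT E d) e]].

(* d-th symmetric quasi power (M_1,...,M_d) = (Ms 1, ..., Ms d) of M,
   where M is a matroid on the whole of E. *)
Definition sym_quasi_power (E : finType) (d : nat) (M : matroid E)
    (Ms : nat -> matroid (msetT E d)) : Prop :=
  (forall i, 1 <= i <= d -> ground (Ms i) = @Sym E d i) /\
  iso_restr M (Ms 1) (@msingle E d) (@Sym E d 1) /\
  (forall i, 1 <= i <= d -> forall alpha, alpha \in @Sym E d (d - i) ->
     if [forall e, (0 < alpha e) ==> ~~ loop M e]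
     then iso_restr (Ms i) (Ms d) (mmul alpha) (mmul alpha @: @Sym E d i)
     else rk (Ms d) (mmul alpha @: @Sym E d i) = 0).

Definition sym_power (E : finType) (d : nat) (M : matroid E)
    (Ms : nat -> matroid (msetT E d)) : Prop :=
  sym_quasi_power M Ms /\ mrank (Ms d) = 'C(mrank M + d - 1, d).

(* Main.v *)
Require Import Defs.
From mathcomp Require Import all_boot.
Set Implicit Arguments. Unset Strict Implicit. Unset Printing Implicit Defensive.

Definition cl (T : finType) (M : matroid T) (A : {set T}) (y : T) : bool :=
  rk M (y |: A) == rk M A.

Lemma rk_max (T : finType) (M : matroid T) (A I : {set T}) :
  indep M I -> I \subset A -> #|I| <= rk M A.
Proof.
move=> hI hA; rewrite /rk.
exact: (@leq_bigmax_cond _ (fun I => indep M I && (I \subset A)) (fun I => #|I|) I (introT andP (conj hI hA))).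
Qed.

Lemma rk_wit (T : finType) (M : matroid T) (A : {set T}) :
  exists I, [/\ indep M I, I \subset A & #|I| = rk M A].
Proof.
have h0 : 0 < #|[pred I : {set T} | indep M I && (I \subset A)]|.
  by apply/card_gt0P; exists set0; rewrite inE indep0 sub0set.
have [I hI e] := eq_bigmax_cond (fun I : {set T} => #|I|) h0.
move: hI; rewrite inE => /andP[h1 h2]; exists I; split => //.
Qed.

Lemma rk_mono (T : finType) (M : matroid T) (A B : {set T}) :
  A \subset B -> rk M A <= rk M B.
Proof.
move=> sAB; have [I [h1 h2 <-]] := rk_wit M A.
by apply: rk_max h1 (subset_trans h2 sAB).
Qed.

Lemma rk_card (T : finType) (M : matroid T) (A : {set T}) : rk M A <= #|A|.
Proof. have [I [h1 h2 <-]] := rk_wit M A; exact: subset_leq_card. Qed.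

Lemma indep_rk (T : finType) (M : matroid T) (A : {set T}) :
  indep M A -> rk M A = #|A|.
Proof. by move=> h; apply/eqP; rewrite eqn_leq rk_card rk_max. Qed.

Lemma rk_indep (T : finType) (M : matroid T) (A : {set T}) :
  rk M A = #|A| -> indep M A.
Proof.
have [I [h1 h2 <-]] := rk_wit M A => e.
have : I == A by rewrite eqEcard h2 e leqnn.
by move/eqP <-.
Qed.

Lemma rk0 (T : finType) (M : matroid T) : rk M set0 = 0.
Proof. by apply/eqP; rewrite -leqn0 (leq_trans (rk_card _ _)) // cards0. Qed.

Lemma rkU1 (T : finType) (M : matroid T) (A : {set T}) y :
  rk M (y |: A) <= (rk M A).+1.
Proof.
have [I [h1 h2 <-]] := rk_wit M (y |: A).
rewrite (cardsD1 y I) -add1n leq_add //; first by case: (y \in I).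
apply: rk_max; first by apply: indep_sub h1; apply: subD1set.
apply/subsetP=> z; rewrite !inE => /andP[zy zI].
by move: (subsetP h2 z zI); rewrite !inE (negbTE zy).
Qed.

Lemma aug (T : finType) (M : matroid T) (A I : {set T}) :
  indep M I -> I \subset A -> #|I| < rk M A ->
  exists2 x, x \in A :\: I & indep M (x |: I).
Proof.
move=> hI sIA lt; have [J [h1 h2 e]] := rk_wit M A.
have lt' : #|I| < #|J| by rewrite e.
have [x] := indep_aug hI h1 lt'.
rewrite !inE => /andP[xI xJ] hx; exists x => //.
by rewrite !inE xI (subsetP h2).
Qed.

Lemma ext (T : finType) (M : matroid T) (A I : {set T}) :
  indep M I -> I \subset A ->
  exists J, [/\ indep M J, I \subset J, J \subset A & #|J| = rk M A].
Proof.
move Hn: (rk M A - #|I|) => n; elim: n I Hn => [|n IH] I Hn hI sIA.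
  exists I; split => //; apply/eqP; rewrite eqn_leq rk_max //.
  by rewrite -subn_eq0 Hn.
have lt : #|I| < rk M A by rewrite -subn_gt0 Hn.
have [x] := aug hI sIA lt; rewrite !inE => /andP[xI xA] hx.
have [||J [j1 j2 j3 j4]] := IH (x |: I) _ hx.
- by rewrite cardsU1 xI add1n subnS Hn.
- by rewrite subUset sub1set xA.
by exists J; split => //; apply: subset_trans j2; apply: subsetUr.
Qed.

Lemma rk_U1ge (T : finType) (M : matroid T) (A : {set T}) y :
  rk M A <= rk M (y |: A).
Proof. by apply: rk_mono; apply: subsetUr. Qed.

Lemma cl_mono (T : finType) (M : matroid T) (A B : {set T}) y :
  A \subset B -> cl M A y -> cl M B y.
Proof.
move=> sAB /eqP hA; rewrite /cl eqn_leq rk_U1ge andbT.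
have [I [h1 h2 h3]] := rk_wit M A.
have [J [j1 j2 j3 j4]] := ext h1 (subset_trans h2 sAB).
rewrite leqNgt; apply/negP => lt.
have [||x] := @aug _ M (y |: B) J j1.
- by apply: subset_trans j3 (subsetUr _ _).
- by rewrite j4.
rewrite !inE => /andP[xJ /orP[/eqP xy|xB]] hx; last first.
  have sxB : x |: J \subset B by rewrite subUset sub1set xB j3.
  by have := rk_max hx sxB; rewrite cardsU1 xJ j4 add1n ltnn.
subst x.
have yI : y \notin I by apply/negP => yI; move: xJ; rewrite (subsetP j2 _ yI).
have := rk_max (indep_sub (setUS [set y] j2) hx) (setUS [set y] h2).
by rewrite cardsU1 yI h3 hA add1n ltnn.
Qed.

Lemma cl_self (T : finType) (M : matroid T) (A : {set T}) y :
  y \in A -> cl M A y.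
Proof. by move=> yA; rewrite /cl (setUidPr _) // sub1set. Qed.

Lemma rk_cl (T : finType) (M : matroid T) (A Y : {set T}) :
  {in A, forall a, cl M Y a} -> rk M (Y :|: A) = rk M Y.
Proof.
elim: {A}_.+1 {-2}A (ltnSn #|A|) => // n IH A ltA hA.
have [->|[a aA]] := set_0Vmem A; first by rewrite setU0.
have e : Y :|: A = a |: (Y :|: (A :\ a)).
  by rewrite [RHS]setUCA (setD1K aA).
have hA' : {in A :\ a, forall b, cl M Y b}.
  by move=> b; rewrite inE => /andP[_ /hA].
rewrite e -(IH (A :\ a)) //; last by rewrite (cardsD1 a A) aA in ltA.
apply/eqP; apply: cl_mono (hA a aA); exact: subsetUl.
Qed.

Lemma cl_trans (T : finType) (M : matroid T) (A Y : {set T}) y :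
  {in A, forall a, cl M Y a} -> cl M A y -> cl M Y y.
Proof.
move=> hA hy; rewrite /cl eqn_leq rk_U1ge andbT.
have h : rk M (y |: (Y :|: A)) = rk M Y.
  by have /eqP := cl_mono (subsetUr Y A) hy; rewrite (rk_cl hA).
by rewrite -h; apply: rk_mono; apply: setUS; apply: subsetUl.
Qed.

Lemma cl_exch (T : finType) (M : matroid T) (A : {set T}) x y :
  cl M (x |: A) y -> ~~ cl M A y -> cl M (y |: A) x.
Proof.
rewrite /cl => /eqP h1 h2.
have e : rk M (y |: A) = (rk M A).+1.
  by apply/eqP; rewrite eqn_leq rkU1 ltn_neqAle eq_sym h2 rk_U1ge.
rewrite eqn_leq rk_U1ge andbT setUCA h1 e; exact: rkU1.
Qed.

Lemma cl_loop (T : finType) (M : matroid T) (S Y : {set T}) z :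
  rk M S = 0 -> z \in S -> cl M Y z.
Proof.
move=> h zS; apply: (@cl_mono _ _ set0); first exact: sub0set.
rewrite /cl rk0 setU0; apply/eqP/eqP; rewrite -leqn0 -h.
by apply: rk_mono; rewrite sub1set.
Qed.

Lemma flat_ncl (T : finType) (M : matroid T) (F : {set T}) x :
  flat M F -> x \in ground M -> x \notin F -> ~~ cl M F x.
Proof.
move=> [_ h] xg xF; rewrite /cl neq_ltn; apply/orP; right.
by apply: h; rewrite inE xF.
Qed.

Lemma iso_rk (T T' : finType) (N : matroid T) (N' : matroid T') (f : T -> T') (S : {set T'}) (A : {set T}) :
  iso_restr N N' f S -> A \subset ground N -> rk N' (f @: A) = rk N A.
Proof.
move=> [inj [_ [_ hI]]] sA; apply/eqP; rewrite eqn_leq; apply/andP; split.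
  have [I' [h1 h2 <-]] := rk_wit N' (f @: A).
  set I := A :&: f @^-1: I'.
  have sI : I \subset ground N by apply: subset_trans sA; apply: subsetIl.
  have eI : f @: I = I'.
    apply/setP=> y; apply/imsetP/idP => [[a]|yI].
      by rewrite !inE => /andP[_ ha] ->.
    have /imsetP[a aA ya] := subsetP h2 y yI; subst y.
    by exists a => //; rewrite !inE aA yI.
  have cI : #|f @: I| = #|I|.
    by apply: card_in_imset; move=> a b /(subsetP sI) ha /(subsetP sI) hb; apply: inj.
  rewrite -eI cI; apply: rk_max; last exact: subsetIl.
  by rewrite hI // eI.
have [I [h1 h2 <-]] := rk_wit N A.
have sI : I \subset ground N by apply: subset_trans sA.
have cI : #|f @: I| = #|I|.
  by apply: card_in_imset; move=> a b /(subsetP sI) ha /(subsetP sI) hb; apply: inj.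
rewrite -cI; apply: rk_max; first by rewrite -hI.
exact: imsetS.
Qed.

Lemma iso_cl (T T' : finType) (N : matroid T) (N' : matroid T') (f : T -> T') (S : {set T'}) (A : {set T}) y :
  iso_restr N N' f S -> A \subset ground N -> y \in ground N ->
  cl N' (f @: A) (f y) = cl N A y.
Proof.
move=> iso sA yg; rewrite /cl -imsetU1 !(iso_rk iso) //.
by rewrite subUset sub1set yg.
Qed.


Definition mset (E : finType) (d : nat) (s : seq E) : msetT E d :=
  [ffun e => inord (count_mem e s)].

Lemma mset_val (E : finType) (d : nat) (s : seq E) e :
  size s <= d -> (mset d s e : nat) = count_mem e s.
Proof. by move=> h; rewrite ffunE inordK // ltnS (leq_trans (count_size _ _)). Qed.

Lemma sum_count (E : finType) (w : E -> nat) (s : seq E) :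
  \sum_e count_mem e s * w e = sumn (map w s).
Proof.
elim: s => [|a s IH] /=; first by rewrite big1.
under eq_bigr => e _ do rewrite mulnDl.
rewrite big_split /= IH; congr (_ + _).
rewrite (bigD1 a) //= eqxx mul1n big1 ?addn0 // => e ea.
by rewrite eq_sym (negbTE ea).
Qed.

Lemma sum_count1 (E : finType) (s : seq E) :
  \sum_e count_mem e s = size s.
Proof.
have := sum_count (fun _ => 1) s; under eq_bigr do rewrite muln1.
move=> ->; by elim: s => //= a s ->.
Qed.

Lemma mset_Sym (E : finType) (d : nat) (s : seq E) k :
  size s = k -> k <= d -> mset d s \in @Sym E d k.
Proof.
move=> hs hk; rewrite inE; apply/eqP; rewrite -hs -sum_count1.
by apply: eq_bigr => e _; rewrite mset_val // hs.
Qed.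

Lemma mset_cat (E : finType) (d : nat) (s1 s2 : seq E) :
  size (s1 ++ s2) <= d -> mmul (mset d s1) (mset d s2) = mset d (s1 ++ s2).
Proof.
rewrite size_cat => h; apply/ffunP => e; rewrite !ffunE.
have h1 : count_mem e s1 <= d.
  by apply: leq_trans (count_size _ _) (leq_trans (leq_addr _ _) h).
have h2 : count_mem e s2 <= d.
  by apply: leq_trans (count_size _ _) (leq_trans (leq_addl _ _) h).
by rewrite !inordK ?count_cat.
Qed.

Lemma msingle_mset (E : finType) (d : nat) (e : E) : msingle d e = mset d [:: e].
Proof. by apply/ffunP => x; rewrite !ffunE /= addn0 eq_sym. Qed.

Lemma mset_perm (E : finType) (d : nat) (s t : seq E) :
  perm_eq s t -> mset d s = mset d t.
Proof. by move/permP => h; apply/ffunP => x; rewrite !ffunE h. Qed.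

Lemma mset_pos (E : finType) (d : nat) (s : seq E) e :
  size s <= d -> (0 < mset d s e) = (e \in s).
Proof. by move=> h; rewrite mset_val // -has_count has_pred1. Qed.

Lemma mset_ex (E : finType) (d : nat) (m : msetT E d) k :
  m \in @Sym E d k -> exists s, size s = k /\ mset d s = m.
Proof.
rewrite inE => /eqP hk.
exists (flatten [seq nseq (m e) e | e <- enum E]); split.
  rewrite size_flatten /shape -map_comp sumnE big_map -hk big_enum /=.
  by apply: eq_bigr => e _; rewrite /= size_nseq.
apply/ffunP => x; rewrite ffunE count_flatten -map_comp sumnE big_map big_enum /=.
rewrite (bigD1 x) //= count_nseq /= eqxx mul1n big1 ?addn0 ?inord_val //.
by move=> e ex; rewrite count_nseq /= (negbTE ex).
Qed.


Lemma mset_split (E : finType) (d : nat) (pre post : seq E) q :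
  (size (pre ++ post)).+1 = d ->
  mset d (pre ++ q :: post) = mmul (mset d (pre ++ post)) (msingle d q).
Proof.
move=> hs; rewrite msingle_mset mset_cat; last by rewrite size_cat /= addn1 hs.
apply: mset_perm; rewrite -catA perm_cat2l cats1 perm_sym perm_rcons perm_refl //.
Qed.

Lemma R1 (E : finType) (d : nat) (M : matroid E) (Ms : nat -> matroid (msetT E d))
  (pre post : seq E) (a : E) (Q : {set E}) (Y : {set msetT E d}) :
  1 <= d -> ground M = [set: E] -> sym_quasi_power M Ms ->
  (size (pre ++ post)).+1 = d -> cl M Q a ->
  (forall q, q \in Q -> cl (Ms d) Y (mset d (pre ++ q :: post))) ->
  cl (Ms d) Y (mset d (pre ++ a :: post)).
Proof.
move=> hd hg [hgr [iso0 hres]] hs ha hQ.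
set al := mset d (pre ++ post).
have alS : al \in @Sym E d (d - 1).
  by apply: mset_Sym; rewrite -hs ?subn1 // leq_pred.
have s1 : forall q, msingle d q \in @Sym E d 1.
  by move=> q; rewrite msingle_mset; apply: mset_Sym.
rewrite (mset_split _ hs).
have h1d : 1 <= 1 <= d by rewrite leqnn hd.
have := hres 1 h1d al alS.
case: ifP => _ iso1; last first.
  apply: (@cl_loop _ (Ms d) _ Y _ iso1); exact: imset_f.
have g1 : ground (Ms 1) = @Sym E d 1 by apply: hgr.
have c1 : cl (Ms 1) (msingle d @: Q) (msingle d a).
  by rewrite (iso_cl iso0) // hg ?subsetT ?inE.
have c2 : cl (Ms d) (mmul al @: (msingle d @: Q)) (mmul al (msingle d a)).
  rewrite (iso_cl iso1) // g1; last by apply: s1.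
  by apply/subsetP => z /imsetP[q _ ->]; apply: s1.
apply: cl_trans c2 => z /imsetP[y /imsetP[q qQ ->] ->].
by rewrite -(mset_split _ hs); apply: hQ.
Qed.

Lemma Expand (E : finType) (d : nat) (M : matroid E) (Ms : nat -> matroid (msetT E d))
  (P : E -> {set E}) (s pre : seq E) (Y : {set msetT E d}) :
  1 <= d -> ground M = [set: E] -> sym_quasi_power M Ms ->
  size pre + size s = d -> (forall e, e \in s -> cl M (P e) e) ->
  (forall t, size t = size s -> all2 (fun b a => b \in P a) t s ->
     cl (Ms d) Y (mset d (pre ++ t))) ->
  cl (Ms d) Y (mset d (pre ++ s)).
Proof.
move=> hd hg hq; elim: s pre => [|a s IH] pre hs hP hY; first exact: hY.
apply: (@R1 E d M Ms pre s a (P a) Y hd hg hq); first by rewrite size_cat -hs /= addnS.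
  by apply: hP; rewrite inE eqxx.
move=> q qP; rewrite -cat_rcons; apply: IH.
- by rewrite size_rcons -hs /= addnS.
- by move=> e es; apply: hP; rewrite inE es orbT.
move=> t ht hall; rewrite cat_rcons; apply: hY => /=; first by rewrite ht.
by rewrite qP hall.
Qed.


Lemma supp0 (E : finType) (d : nat) (m : msetT E d) (B : {set E}) e :
  [forall e, (0 < m e) ==> (e \in B)] -> e \notin B -> (m e : nat) = 0.
Proof.
move=> /forallP /(_ e) h eB; apply/eqP; rewrite -leqn0 leqNgt.
by apply: contra eB; move: h => /implyP.
Qed.

Lemma count_Bd (E : finType) (d : nat) (B : {set E}) : 1 <= d ->
  #|[set m in @Sym E d d | [forall e, (0 < m e) ==> (e \in B)]]| <= 'C(#|B| + d - 1, d).
Proof.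
move=> hd; case hk: #|B| => [|k].
  rewrite add0n bin_small; last by rewrite subn1 ltn_predL.
  rewrite leqn0 cards_eq0; apply/eqP/setP => m; rewrite !inE.
  apply/negbTE/negP => /andP[/eqP hs hsupp].
  have : \sum_e (m e : nat) = 0.
    apply: big1 => e _; apply: (supp0 hsupp).
    by move/eqP: hk; rewrite cards_eq0 => /eqP ->; rewrite inE.
  by rewrite hs => d0; move: hd; rewrite d0.
have szB : forall m : msetT E d, size (map m (enum B)) == k.+1.
  by move=> m; rewrite size_map -cardE hk.
pose f (m : msetT E d) : k.+1.-tuple 'I_d.+1 := Tuple (szB m).
set Bd := [set m in _ | _].
have finj : {in Bd &, injective f}.
  move=> m1 m2; rewrite !inE => /andP[_ h1] /andP[_ h2] /(congr1 val) /= e12.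
  apply/ffunP => e; case eB: (e \in B).
    by apply: (eq_in_map m1 m2 (enum B)).2 => //; rewrite mem_enum.
  by apply: val_inj => /=; rewrite (supp0 h1 (negbT eB)) (supp0 h2 (negbT eB)).
have eC : 'C(k + d, d) = 'C(k + d, k) by rewrite -[RHS]bin_sub ?leq_addr // addKn.
rewrite -(card_in_imset finj) addSn subn1 /= eC.
rewrite -card_ord_partitions; apply: subset_leq_card; apply/subsetP => t.
case/imsetP => m mB ->; rewrite inE /=; move: mB; rewrite /Bd inE => /andP[hs hsupp].
rewrite big_map big_enum /=; move: hs; rewrite inE => /eqP hs.
apply/eqP; apply: etrans _ hs; rewrite big_mkcond /=; apply: eq_bigr => e _.
by case: ifP => // eB; rewrite (supp0 hsupp) ?eB.
Qed.


Lemma W_mset (E : finType) (d : nat) (w : E -> nat) (s : seq E) :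
  size s <= d -> \sum_e (mset d s e : nat) * w e = sumn (map w s).
Proof.
by move=> h; rewrite -sum_count; apply: eq_bigr => e _; rewrite mset_val.
Qed.

Lemma all2_in (A B : eqType) (R : A -> B -> bool) (t : seq A) (s : seq B) b :
  all2 R t s -> b \in t -> exists2 a, a \in s & R b a.
Proof.
elim: t s => [|c t IH] [|a s] //= /andP[h1 h2]; rewrite inE => /orP[/eqP ->|bt].
  by exists a; rewrite ?inE ?eqxx.
by have [a' h3 h4] := IH s h2 bt; exists a'; rewrite ?inE ?h3 ?orbT.
Qed.

Lemma sum_all2 (A B : eqType) (R : A -> B -> bool) (f : A -> nat) (g : B -> nat)
  (t : seq A) (s : seq B) :
  all2 R t s -> (forall b a, b \in t -> R b a -> f b <= g a) ->
  sumn (map f t) <= sumn (map g s).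
Proof.
elim: t s => [|c t IH] [|a s] //= /andP[h1 h2] h.
apply: leq_add; first by apply: h; rewrite ?inE ?eqxx.
by apply: IH => // b a' bt; apply: h; rewrite inE bt orbT.
Qed.


Theorem proposition2p19 (E : finType) (d : nat) (M : matroid E)
    (Ms : nat -> matroid (msetT E d)) :
  1 <= d -> ground M = [set: E] -> sym_power M Ms ->
  forall F : {set E}, flat M F -> flat (Ms d) (FSym d F).
Proof.
move=> hd hg [hq hrank] F hF.
have hq' := hq; case: hq' => [hgr [iso0 hres]].
have gd : ground (Ms d) = @Sym E d d by apply: hgr; rewrite hd leqnn.
have [BF [iBF _ sBF cBF]] := ext (indep0 M) (sub0set F).
have [B [iB sBFB _ cB]] := ext iBF (subsetT BF).
have clB : forall e, cl M B e.
  move=> e; rewrite /cl eqn_leq rk_U1ge andbT (indep_rk iB) cB.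
  by apply: rk_mono; apply: subsetT.
have clBF : forall f, f \in F -> cl M BF f.
  move=> f fF; rewrite /cl eqn_leq rk_U1ge andbT (indep_rk iBF) cBF.
  by apply: rk_mono; rewrite subUset sub1set fF sBF.
have nclBF : forall e, e \notin F -> ~~ cl M BF e.
  move=> e eF; apply/negP => /(cl_mono sBF); apply/negP.
  by apply: flat_ncl => //; rewrite hg inE.
set Bd := [set m in @Sym E d d | [forall e, (0 < m e) ==> (e \in B)]].
have span : forall m, m \in @Sym E d d -> cl (Ms d) Bd m.
  move=> m /mset_ex [s [hs <-]].
  apply: (@Expand E d M Ms (fun _ => B) s [::] Bd hd hg hq) => //.
  move=> t ht hall; apply: cl_self; rewrite inE mset_Sym ?ht ?hs //=.
  apply/forallP => e; apply/implyP; rewrite mset_pos ?ht ?hs // => et.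
  by have [a _] := all2_in hall et.
have iBd : indep (Ms d) Bd.
  apply: rk_indep; apply/eqP; rewrite eqn_leq rk_card /=.
  have h1 : rk (Ms d) (@Sym E d d) = 'C(#|B| + d - 1, d).
    by move: hrank; rewrite /mrank gd hg cB.
  apply: leq_trans (count_Bd B hd) _; rewrite -h1 -(rk_cl span).
  by apply: rk_mono; apply: subsetUr.
split.
  by rewrite gd; apply/subsetP => m; rewrite inE => /andP[].
move=> x; rewrite gd inE => /andP[xF xS].
suff ncx : ~~ cl (Ms d) (FSym d F) x.
  by rewrite ltn_neqAle rk_U1ge andbT eq_sym.
have [s [hs xs]] := mset_ex xS; subst x.
have sF : forall e, e \in s -> e \notin F.
  move=> e es; apply/negP => eF; move: xF; rewrite inE xS /= negb_exists.
  by move=> /forallP /(_ e); rewrite eF mset_pos ?hs // es.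
pose r (e : E) : nat := enum_rank e.
pose G0 := B :\: BF.
pose Gl n := [set g in G0 | r g < n].
have inGl : forall n z, (z \in Gl n) = (z \in G0) && (r z < n) by move=> n z; rewrite inE.
have rinj : injective r by move=> a b /val_inj /enum_rank_inj.
have leadex : forall e, e \notin F -> exists g,
    [&& g \in G0, cl M (BF :|: Gl (r g).+1) e & cl M (e |: (BF :|: Gl (r g))) g].
  move=> e eF.
  have hex : exists n, cl M (BF :|: Gl n) e.
    exists #|E|; have -> : BF :|: Gl #|E| = B.
      apply/setP => z; rewrite !inE /r ltn_ord andbT.
      by case zBF: (z \in BF) => //=; rewrite (subsetP sBFB).
    exact: clB.
  have [n hn hmin] := ex_minnP hex.
  case: n hn hmin => [|m] hn hmin.
    have e0 : BF :|: Gl 0 = BF by apply/setP => z; rewrite !inE ltn0 andbF orbF.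
    by move: hn; rewrite e0 (negbTE (nclBF e eF)).
  have hm : ~~ cl M (BF :|: Gl m) e.
    by apply/negP => /hmin; rewrite ltnn.
  have [g] : exists g, g \in Gl m.+1 :\: Gl m.
    apply/set0Pn; rewrite setD_eq0; apply: contra hm => sub.
    have -> : Gl m = Gl m.+1.
      apply/eqP; rewrite eqEsubset sub andbT; apply/subsetP => z.
      by rewrite !inE => /andP[-> /ltnW].
    exact: hn.
  rewrite inE => /andP[ngl gl].
  have gG : g \in G0 by move: gl; rewrite inGl => /andP[].
  have rg : r g = m.
    move: gl ngl; rewrite !inGl gG /= ltnS => h1 h2.
    by apply/eqP; rewrite eqn_leq h1 leqNgt h2.
  exists g; rewrite rg gG /=.
  have eU : g |: (BF :|: Gl m) = BF :|: Gl m.+1.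
    apply/setP => z; rewrite in_setU1 !in_setU !inGl -rg ltnS [r z <= r g]leq_eqVlt (inj_eq rinj).
    by case: (eqVneq z g) => [->|_] /=; [rewrite gG orbT | ].
  by rewrite hn /=; apply: cl_exch hm; rewrite eU.
pose Pl e g := [&& g \in G0, cl M (BF :|: Gl (r g).+1) e & cl M (e |: (BF :|: Gl (r g))) g].
pose lead e := odflt e [pick g | Pl e g].
have leadP : forall e, e \notin F -> Pl e (lead e).
  move=> e eF; rewrite /lead; case: pickP => [g //|h].
  by have [g hg'] := leadex e eF; move: (h g); rewrite /Pl hg'.
have leadG : forall e, e \in s -> lead e \in G0.
  by move=> e es; have /and3P[] := leadP e (sF e es).
pose W (m : msetT E d) := \sum_e (m e : nat) * r e.
set u := mset d (map lead s).
pose D := [set v in @Sym E d d | [forall e, (0 < v e) ==> (e \in G0)] && (W v < W u)].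
pose T := FSym d F :|: D.
have FSymIn : forall t, size t = d -> forall b, b \in t -> b \in F -> mset d t \in FSym d F.
  move=> t ht b bt bF; rewrite inE mset_Sym ?ht //=; apply/existsP; exists b.
  by rewrite bF mset_pos ?ht.
have inG0 : forall z, (z \in G0) = (z \notin BF) && (z \in B) by move=> z; rewrite inE.
have Wm : forall t, size t <= d -> W (mset d t) = sumn (map r t).
  by move=> t ht; rewrite /W W_mset.
have K : forall j, j <= d ->
    cl (Ms d) (mset d s |: T) (mset d (map lead (take j s) ++ drop j s)).
  elim => [_|j IH hj].
    by rewrite take0 drop0 /=; apply: cl_self; rewrite setU11.
  have hj' : j < size s by rewrite hs.
  have a0 : E by move: hj'; case: (s) => [//|y _ _]; exact: y.
  set a := nth a0 s j.
  have aS : a \in s by apply: mem_nth.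
  have e1 : drop j s = a :: drop j.+1 s by rewrite (drop_nth a0 hj').
  have IHj := IH (ltnW hj); rewrite e1 in IHj.
  rewrite (take_nth a0 hj') map_rcons cat_rcons.
  set pre := map lead (take j s) in IHj *; set post := drop j.+1 s in IHj *.
  have hsz : (size (pre ++ post)).+1 = d.
    by rewrite size_cat size_map size_take hj' size_drop hs -addSn subnKC.
  have /and3P[aG cl1 cl2] := leadP a (sF a aS).
  apply: (@R1 E d M Ms pre post (lead a) _ _ hd hg hq hsz cl2) => q.
  rewrite in_setU1 => /orP[/eqP ->|]; first exact: IHj.
  rewrite in_setU => /orP[qBF|].
    apply: cl_self; rewrite in_setU1 in_setU (FSymIn _ _ q) ?orbT //.
    - by rewrite size_cat /= addnS -size_cat.
    - by rewrite mem_cat inE eqxx orbT.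
    - by apply: (subsetP sBF).
  rewrite inGl => /andP[qG qlt].
  have Wu : W u = sumn (map r pre) + r (lead a) + sumn (map r (map lead post)).
    rewrite /u Wm ?size_map ?hs // -[s in map lead s](cat_take_drop j) e1.
    by rewrite !map_cat sumn_cat /= addnA.
  rewrite -cat_rcons.
  apply: (@Expand E d M Ms (fun e => BF :|: Gl (r (lead e)).+1) post (rcons pre q) _ hd hg hq).
  - by rewrite size_rcons addSn -size_cat.
  - move=> e /mem_drop es; by have /and3P[] := leadP e (sF e es).
  move=> t ht hall; apply: cl_self; rewrite in_setU1 in_setU.
  have hsz2 : size (rcons pre q ++ t) = d by rewrite cat_rcons size_cat /= ht -hsz size_cat addnS.
  case hasBF: (has (mem BF) t).
    move/hasP: hasBF => [b bt bBF].
    rewrite (FSymIn _ hsz2 b) ?orbT //; first by rewrite mem_cat bt orbT.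
    by apply: (subsetP sBF).
  have tG : forall b a', b \in t -> b \in BF :|: Gl (r (lead a')).+1 ->
      (b \in G0) && (r b <= r (lead a')).
    move=> b a' bt.
    have nb : b \notin BF by apply: (hasPn (negbT hasBF)).
    by rewrite in_setU inGl ltnS (negbTE nb).
  apply/orP; right; apply/orP; right; rewrite inE mset_Sym ?hsz2 //=.
  apply/andP; split.
    apply/forallP => e; apply/implyP; rewrite mset_pos ?hsz2 //.
    rewrite cat_rcons mem_cat inE => /orP[/mapP[y ys ->]|/orP[/eqP ->//|et]].
      by apply: leadG; apply: mem_take ys.
    have [a' _ hb] := all2_in hall et.
    by have /andP[] := tG _ _ et hb.
  rewrite Wm ?hsz2 // Wu cat_rcons map_cat sumn_cat /= addnA.
  rewrite -addnA -[X in _ < X]addnA ltn_add2l -addSn leq_add //.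
  rewrite -map_comp; apply: (sum_all2 hall) => b a' bt hb.
  by have /andP[] := tG _ _ bt hb.
have hu := K d (leqnn d).
rewrite take_oversize ?hs // drop_oversize ?hs // cats0 -/u in hu.
have uG : forall e, 0 < u e -> e \in G0.
  by move=> e; rewrite mset_pos ?size_map ?hs // => /mapP[y ys ->]; apply: leadG.
have uB : u \in Bd.
  rewrite inE mset_Sym ?size_map ?hs //=; apply/forallP => e; apply/implyP => /uG.
  by rewrite inG0 => /andP[].
have FSB : {in FSym d F, forall m, cl (Ms d) (Bd :\ u) m}.
  move=> m; rewrite inE => /andP[mS /existsP[f /andP[fF fpos]]].
  have [s' [hs' ms']] := mset_ex mS; subst m.
  have fs' : f \in s' by rewrite -(@mset_pos E d) ?hs'.
  rewrite (@mset_perm E d _ _ (perm_to_rem fs')).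
  apply: (@Expand E d M Ms (fun e => if e \in F then BF else B) (f :: rem f s') [::] _ hd hg hq).
  - by rewrite /= size_rem // hs' prednK.
  - by move=> e _; case: ifP => eF; [apply: clBF | apply: clB].
  case=> [//|b t] /= ht /andP[hb hall].
  rewrite fF in hb; apply: cl_self.
  have hsz3 : size (b :: t) = d by rewrite /= ht size_rem // hs' prednK.
  rewrite in_setD1; apply/andP; split.
    apply/negP => /eqP ebu.
    have : 0 < u b by rewrite -ebu mset_pos ?hsz3 // inE eqxx.
    by move/uG; rewrite inG0 hb.
  rewrite inE mset_Sym ?hsz3 //=; apply/forallP => e; apply/implyP.
  rewrite mset_pos ?hsz3 // inE => /orP[/eqP ->|et]; first by apply: (subsetP sBFB).
  have [a' _] := all2_in hall et.
  by case: ifP => _ // /(subsetP sBFB).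
apply/negP => cx.
have cxB := cl_trans FSB cx.
have cu : cl (Ms d) (Bd :\ u) u.
  apply: cl_trans hu => y; rewrite in_setU1 in_setU => /orP[/eqP ->//|/orP[yF|yD]].
    exact: FSB.
  apply: cl_self; move: yD; rewrite inE => /andP[yS /andP[ysupp yW]].
  rewrite in_setD1 inE yS /=; apply/andP; split.
    by apply/negP => /eqP yu; move: yW; rewrite yu ltnn.
  apply/forallP => e; apply/implyP => /(implyP (forallP ysupp e)).
  by rewrite inG0 => /andP[].
move: cu; rewrite /cl (setD1K uB) (indep_rk iBd).
have := rk_card (Ms d) (Bd :\ u); rewrite (cardsD1 u Bd) uB add1n.
by move=> h /eqP e; move: h; rewrite -e ltnn.
Qed.
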